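(* Let $n\ge 2$. Every equilibrium graph $G$ of $(1,1,\dots,1)$-BG (all $n$ budgets equal to $1$) in the SUM version has connected underlying graph $U(G)$, $U(G)$ has a unique cycle, this cycle has at most $5$ vertices, and every vertex is either on the cycle or adjacent in $U(G)$ to a vertex of the cycle.
   Context: Bounded budget network creation game $(b_1,\dots,b_n)$-BG: $n$ players with integer budgets $0\le b_i\le n-1$. A strategy of player $i$ is a set $S_i\subseteq\{1,\dots,n\}\setminus\{i\}$ with $|S_i|=b_i$; a profile is realized by the directed graph $G$ on $u_1,\dots,u_n$ with an arc $\overrightarrow{u_iu_j}$ iff $j\in S_i$. $U(G)$ is the undirected multigraph obtained by ignoring directions; if both $\overrightarrow{uv}$ and $\overrightarrow{vu}$ are arcs (a brace), $uv$ is a double edge of $U(G)$, regarded as a cycle with 2 vertices. $\operatorname{dist}(u,v)$ is the distance in $U(G)$, defined as $n^2$ between different components. SUM cost: $c_{SUM}(u)=\sum_v\operatorname{dist}(u,v)$. An equilibrium graph in the SUM version is a realization in which no vertex can decrease its SUM cost by changing its own strategy while the others are fixed. *)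

(* Defs.v *)
(* (1,...,1)-BG: each player i buys exactly one arc i -> f i. *)
From mathcomp Require Import all_boot.
Set Implicit Arguments. Unset Strict Implicit. Unset Printing Implicit Defensive.

Section BG.
Variable n : nat.
Implicit Types (f : 'I_n -> 'I_n) (u v w i j : 'I_n).

Definition valid_profile f := forall i, f i != i.

Definition adjU f : rel 'I_n := fun u v => (f u == v) || (f v == u).

Fixpoint reachU f (k : nat) u v : bool :=
  if k is k'.+1 then reachU f k' u v || [exists w, reachU f k' u w && adjU f w v]
  else u == v.

(* distance in U(G): least k with v reachable within k steps (every finite
   distance is < n), and n^2 between different components. *)
Definition distU f u v : nat :=
  let k := find (fun k => reachU f k u v) (iota 0 n) in
  if k < n then k else n ^ 2.

Definition cost_sum f u : nat := \sum_(v : 'I_n) distU f u v.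

Definition deviate f i j : 'I_n -> 'I_n := fun x => if x == i then j else f x.

Definition equilibrium_sum f :=
  forall i j, j != i -> cost_sum f i <= cost_sum (deviate f i j) i.

Definition connectedU f := forall u v, connect (adjU f) u v.

(* Edges of U(G) are indexed by their owner i : edge {i, f i}.
   A cycle of the multigraph U(G) is a nonempty set C of edges forming a
   connected 2-regular subgraph (a brace gives a 2-cycle). *)
Definition cverts f (C : {set 'I_n}) : {set 'I_n} :=
  [set v | [exists i in C, (i == v) || (f i == v)]].

Definition cdeg f (C : {set 'I_n}) v : nat :=
  #|[set i in C | i == v]| + #|[set i in C | f i == v]|.

Definition cadj f (C : {set 'I_n}) : rel 'I_n := fun x y =>
  [exists i in C, ((i == x) && (f i == y)) || ((i == y) && (f i == x))].

Definition is_cycle f (C : {set 'I_n}) : bool :=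
  [&& C != set0,
      [forall v in cverts f C, cdeg f C v == 2] &
      [forall x in cverts f C, forall y in cverts f C, connect (cadj f C) x y]].

End BG.

(* Main.v *)
Require Import Defs.
From mathcomp Require Import all_boot zify.
Set Implicit Arguments. Unset Strict Implicit. Unset Printing Implicit Defensive.


Section Dist.
Variable n : nat.
Variable f : 'I_n -> 'I_n.

Lemma adjU_sym : symmetric (adjU f).
Proof. by move=> x y; rewrite /adjU orbC. Qed.

Lemma reach0 u v : reachU f 0 u v = (u == v). Proof. by []. Qed.

Lemma reach_mono k m u v : k <= m -> reachU f k u v -> reachU f m u v.
Proof.
move=> /subnK <-; elim: (m - k) => //= d IH H; by rewrite IH.
Qed.

Lemma reach_step k u w v : reachU f k u w -> adjU f w v -> reachU f k.+1 u v.
Proof. move=> H1 H2 /=; apply/orP; right; apply/existsP; exists w; by rewrite H1. Qed.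

Lemma reachS k u v : reachU f k.+1 u v ->
  reachU f k u v \/ exists w, reachU f k u w /\ adjU f w v.
Proof.
move=> /= /orP [H|/existsP [w /andP [H1 H2]]]; [by left|right; by exists w].
Qed.

Lemma reach_cons k u w v : adjU f u w -> reachU f k w v -> reachU f k.+1 u v.
Proof.
move=> Huw; elim: k v => [|k IH] v.
  rewrite reach0 => /eqP <-; apply: (reach_step (w:=u)) => //; by rewrite reach0.
move/reachS => [H|[w' [H1 H2]]].
  by apply: (reach_mono (k:=k.+1)) => //; apply: IH.
by apply: reach_step (IH _ H1) H2.
Qed.

Lemma reach_connect k u v : reachU f k u v -> connect (adjU f) u v.
Proof.
elim: k v => [|k IH] v; first by rewrite reach0 => /eqP ->.
move/reachS => [H|[w [H1 H2]]]; first exact: IH.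
apply: connect_trans (IH _ H1) (connect1 H2).
Qed.

Lemma path_reach u p : path (adjU f) u p -> reachU f (size p) u (last u p).
Proof.
elim: p u => [|w p IH] u /=; first by rewrite eqxx.
move=> /andP [H1 H2]; exact: reach_cons H1 (IH _ H2).
Qed.

Lemma connect_reach u v : connect (adjU f) u v -> reachU f n.-1 u v.
Proof.
move=> /connectP [p Hp ->].
case: (shortenP Hp) => p' Hp' Hu _.
apply: (reach_mono (k := size p')); last exact: path_reach.
have Hc := card_uniqP Hu.
have Hm := max_card (mem (u :: p')); rewrite card_ord Hc /= in Hm. rewrite -subn1; apply: leq_trans (leq_sub2r 1 Hm). by rewrite subn1.
Qed.

Definition Pk u v := fun k => reachU f k u v.

Lemma dist_le k u v : reachU f k u v -> distU f u v <= k.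
Proof.
move=> H.
have Hn : 0 < n := leq_ltn_trans (leq0n _) (ltn_ord u).
have Hr := connect_reach (reach_connect H).
rewrite /distU.
set P := (fun k0 : nat => reachU f k0 u v).
have Hhas : has P (iota 0 n).
  apply/hasP; exists n.-1; last exact: Hr. rewrite mem_iota; lia.
have Hlt : find P (iota 0 n) < n by have := Hhas; rewrite has_find size_iota.
rewrite Hlt.
case: (leqP (find P (iota 0 n)) k) => // Hk.
have Hk' : k < n by lia.
have := before_find 0 Hk. rewrite nth_iota // add0n /P H. done.
Qed.

Lemma dist_reach u v : connect (adjU f) u v ->
  reachU f (distU f u v) u v /\ distU f u v < n.
Proof.
move=> Hc; have Hr := connect_reach Hc.
have Hn : 0 < n := leq_ltn_trans (leq0n _) (ltn_ord u).
rewrite /distU.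
set P := (fun k0 : nat => reachU f k0 u v).
have Hhas : has P (iota 0 n).
  apply/hasP; exists n.-1; last exact: Hr. rewrite mem_iota; lia.
have Hlt : find P (iota 0 n) < n by have := Hhas; rewrite has_find size_iota.
rewrite Hlt; split => //.
have := nth_find 0 Hhas; rewrite nth_iota //.
Qed.

Lemma dist_nconn u v : ~~ connect (adjU f) u v -> distU f u v = n ^ 2.
Proof.
move=> Hc; rewrite /distU.
case: ifP => // Hlt.
have Hhas : has (fun k0 : nat => reachU f k0 u v) (iota 0 n)
  by rewrite has_find size_iota.
have := nth_find 0 Hhas; rewrite nth_iota // add0n => /reach_connect H.
by rewrite H in Hc.
Qed.

Lemma dist0 u : distU f u u = 0.
Proof. apply/eqP; rewrite -leqn0; apply: (dist_le (k:=0)); by rewrite reach0. Qed.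

Lemma dist_eq0 u v : connect (adjU f) u v -> distU f u v = 0 -> u = v.
Proof. move=> /dist_reach [H _] E; rewrite E reach0 in H; exact/eqP. Qed.

Lemma dist_lip u x y : connect (adjU f) u x -> adjU f x y ->
  distU f u y <= (distU f u x).+1.
Proof. move=> /dist_reach [H _] Ha; apply: dist_le; exact: reach_step H Ha. Qed.

Lemma dist_desc u x : connect (adjU f) u x -> x != u ->
  exists y, adjU f x y /\ distU f u y < distU f u x.
Proof.
move=> Hc Hne; have [H _] := dist_reach Hc.
move: H; case E: (distU f u x) => [|d].
  rewrite reach0 => /eqP Eu; by rewrite Eu eqxx in Hne.
move/reachS => [H|[w [H1 H2]]].
  have := dist_le H; rewrite E; lia.
exists w; split; first by rewrite adjU_sym.
have := dist_le H1; lia.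
Qed.

Lemma lip_lb (g : 'I_n -> nat) s x :
  (forall a b, adjU f a b -> g b <= (g a).+1) ->
  connect (adjU f) s x -> g x <= g s + distU f s x.
Proof.
move=> Hg Hc; have [H _] := dist_reach Hc.
suff K : forall k y, reachU f k s y -> g y <= g s + k by exact: K.
elim => [|k IH] y.
  by rewrite reach0 => /eqP ->; rewrite addn0.
move/reachS => [H'|[w [H1 H2]]]; first by have := IH _ H'; lia.
have := IH _ H1; have := Hg _ _ H2; lia.
Qed.

Lemma desc_ub (g : 'I_n -> nat) s x :
  (forall a, a != s -> exists b, adjU f a b /\ g b < g a) ->
  distU f s x <= g x.
Proof.
move=> Hg; apply: dist_le.
suff K : forall m y, g y <= m -> reachU f (g y) s y by exact: K.
elim => [|m IH] y Hk.
  case: (eqVneq y s) => [->|Hne]; first by apply: (reach_mono (k:=0)); rewrite // reach0.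
  have [b [_ Hb]] := Hg _ Hne; lia.
case: (eqVneq y s) => [->|Hne]; first by apply: (reach_mono (k:=0)); rewrite // reach0.
have [b [Hab Hb]] := Hg _ Hne.
have Hr := IH b ltac:(lia).
apply: (reach_mono (k := (g b).+1)); first lia.
apply: reach_step Hr _; by rewrite adjU_sym.
Qed.

End Dist.


Section Tools.
Variable n : nat.
Implicit Types (f : 'I_n -> 'I_n).

Lemma cost_lb f (g : 'I_n -> nat) s :
  (forall x, g x <= distU f s x) -> \sum_x g x <= cost_sum f s.
Proof. move=> H; apply: leq_sum => x _; exact: H. Qed.

Lemma cost_ub f (g : 'I_n -> nat) s :
  (forall x, distU f s x <= g x) -> cost_sum f s <= \sum_x g x.
Proof. move=> H; apply: leq_sum => x _; exact: H. Qed.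

Lemma tri f u w x : connectedU f -> distU f u x <= distU f u w + distU f w x.
Proof.
move=> Hc; apply: (lip_lb (g := fun y => distU f u y)) => // a b Hab.
exact: dist_lip (Hc _ _) Hab.
Qed.

Lemma cut_lb f (S : {set 'I_n}) a b s x : connectedU f ->
  a \in S -> b \notin S ->
  (forall p q, adjU f p q -> p \in S -> q \notin S -> p = a /\ q = b) ->
  s \in S -> x \notin S -> distU f s a + 1 + distU f b x <= distU f s x.
Proof.
move=> Hc Ha Hb Hcr Hs Hx.
pose g y := if y \in S then distU f s y else distU f s a + 1 + distU f b y.
have := lip_lb (g := g) (s := s) (x := x) _ (Hc _ _).
rewrite /g Hs (negbTE Hx) dist0; apply => p q Hpq.
case Hp: (p \in S); case Hq: (q \in S).
- exact: dist_lip (Hc _ _) Hpq.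
- have [-> ->] := Hcr _ _ Hpq Hp (negbT Hq); by rewrite dist0 addn0 addn1.
- rewrite adjU_sym in Hpq; have [-> ->] := Hcr _ _ Hpq Hq (negbT Hp).
  rewrite dist0; lia.
- have := dist_lip (Hc b p) Hpq; lia.
Qed.

Lemma cut_lb2 f (S : {set 'I_n}) a b s x : connectedU f ->
  a \in S -> b \notin S ->
  (forall p q, adjU f p q -> p \in S -> q \notin S -> p = a /\ q = b) ->
  s \notin S -> x \in S -> distU f s b + 1 + distU f a x <= distU f s x.
Proof.
move=> Hc Ha Hb Hcr Hs Hx.
apply: (cut_lb (S := ~: S)) => //; rewrite ?inE ?Ha ?Hb ?Hs ?Hx //.
move=> p q Hpq; rewrite !inE negbK => Hp Hq.
rewrite adjU_sym in Hpq; have [-> ->] := Hcr _ _ Hpq Hq Hp; done.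
Qed.

Lemma sum_ind (S : {set 'I_n}) : \sum_(x : 'I_n) (x \in S : nat) = #|S|.
Proof.
rewrite -sum1_card [in RHS]big_mkcond /=; apply: eq_bigr => x _; by case: (x \in S).
Qed.

Lemma sum_const_n (c : nat) : \sum_(x : 'I_n) c = n * c.
Proof. by rewrite sum_nat_const card_ord. Qed.

Lemma sum_pt (b : 'I_n) c : \sum_(x : 'I_n) (if x == b then c else 0) = c.
Proof.
rewrite (bigD1 b) //= eqxx big1 ?addn0 // => x /negbTE ->; done.
Qed.

End Tools.

Section Struct.
Variable n : nat.
Variable f : 'I_n -> 'I_n.

Definition per x := fconnect f (f x) x.

Lemma fconP x y : reflect (exists k, iter k f x = y) (fconnect f x y).
Proof.
apply: (iffP idP) => [H|[k <-]]; last exact: fconnect_iter.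
by exists (findex f x y); apply: iter_findex.
Qed.

Lemma perP x : reflect (exists m, iter m.+1 f x = x) (per x).
Proof.
apply: (iffP (fconP _ _)) => [[k Hk]|[k Hk]]; exists k; [by rewrite iterSr | by rewrite -iterSr].
Qed.

Lemma iter_connect x k : connect (adjU f) x (iter k f x).
Proof.
elim: k => [|k IH] //=; apply: connect_trans IH (connect1 _).
by rewrite /adjU eqxx.
Qed.

Lemma exists_per x : exists k, per (iter k f x).
Proof.
have := looping_order f x; rewrite /looping => /trajectP [i Hi E].
exists i; apply/perP; exists (order f x - i).-1.
rewrite prednK; last lia.
by rewrite -iterD subnK ?E // ltnW.
Qed.

Lemma iter_mul x p a : iter p f x = x -> iter (a * p) f x = x.
Proof.
move=> H; elim: a => [|a IH] //; by rewrite mulSn iterD IH H.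
Qed.

Lemma deviate_connect i j x y : per i ->
  connect (adjU f) x y -> connect (adjU (deviate f i j)) x y.
Proof.
move=> /fconP [m Hm].
set f' := deviate f i j.
have Hsym : connect_sym (adjU f') by apply: sym_connect_sym; exact: adjU_sym.
have K : forall k z, iter k f z = i -> connect (adjU f') z i.
  elim => [|k IH] z; first by move=> /= ->.
  rewrite iterSr => Hz.
  case: (eqVneq z i) => [->//|Hne].
  apply: connect_trans (connect1 _) (IH _ Hz).
  by rewrite /adjU /f' /deviate (negbTE Hne) eqxx.
have Kfi : connect (adjU f') i (f i) by rewrite Hsym; exact: K _ _ Hm.
apply: connect_sub => p q /orP [] /eqP E.
  case: (eqVneq p i) => [Ep|Hne].
    by rewrite -E Ep.
  by apply: connect1; rewrite /adjU /f' /deviate (negbTE Hne) E eqxx.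
case: (eqVneq q i) => [Eq|Hne].
  by rewrite Hsym -E Eq.
by apply: connect1; rewrite /adjU /f' /deviate (negbTE Hne) E eqxx orbT.
Qed.

End Struct.

Theorem eq_connected n (f : 'I_n -> 'I_n) :
  valid_profile f -> equilibrium_sum f -> connectedU f.
Proof.
move=> Hv He a b; apply/negPn/negP => Hab.
have [k Hk] := exists_per f a.
set i := iter k f a in Hk.
have Hai : connect (adjU f) a i by apply: iter_connect.
have Hib : ~~ connect (adjU f) i b.
  apply/negP => H; by rewrite (connect_trans Hai H) in Hab.
have Hbi : b != i by apply/eqP => E; rewrite E connect0 in Hib.
have := He i b Hbi.
set f' := deviate f i b.
have Hn : 0 < n := leq_ltn_trans (leq0n _) (ltn_ord a).
have Hub : cost_sum f' i <= \sum_x (if connect (adjU f') i x then n.-1 else n ^ 2).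
  apply: cost_ub => x; case: ifP => H.
    have [_ H2] := dist_reach H; lia.
  by rewrite dist_nconn ?H.
have Hlb : \sum_x (if connect (adjU f) i x then 0 else n ^ 2) <= cost_sum f i.
  apply: cost_lb => x; case: ifP => H //.
  by rewrite dist_nconn ?H.
have Hpt : \sum_x ((if connect (adjU f') i x then n.-1 else n ^ 2) + (if x == b then n ^ 2 else 0))
   <= \sum_x (n.-1 + (if connect (adjU f) i x then 0 else n ^ 2)).
  apply: leq_sum => x _.
  case: (eqVneq x b) => [->|Hne].
    have -> : connect (adjU f') i b.
      by apply: connect1; rewrite /adjU /f' /deviate !eqxx.
    by rewrite (negbTE Hib).
  case Hc: (connect (adjU f) i x).
    by rewrite (deviate_connect b Hk Hc) addn0.
  case: ifP => _; lia.
rewrite big_split /= sum_pt big_split /= sum_const_n in Hpt.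
move=> Heq.
have H1 := leq_trans Hpt (leq_add (leqnn _) (leq_trans Hlb (leq_trans Heq Hub))).
rewrite [X in _ <= X]addnC leq_add2l in H1.
move: H1.
have : n * n.-1 < n ^ 2 by rewrite expnS expn1 ltn_pmul2l // prednK // ltnSn.
lia.
Qed.


Section Cyc.
Variable n : nat.
Variable f : 'I_n -> 'I_n.
Hypothesis Hv : valid_profile f.
Hypothesis Hc : connectedU f.

Lemma connect_ind (P : pred 'I_n) x y :
  (forall a b, adjU f a b -> P a -> P b) -> connect (adjU f) x y -> P x -> P y.
Proof.
move=> HP /connectP [p Hp ->]; elim: p x Hp => //= z p IH x /andP [H1 H2] Px.
exact: IH H2 (HP _ _ H1 Px).
Qed.

Lemma fcon_f x c : per f c -> fconnect f x c = fconnect f (f x) c.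
Proof.
move=> Hp; apply/idP/idP => H; last exact: connect_trans (fconnect1 f x) H.
move: H => /fconP [[|k] Hk].
  by rewrite /= in Hk; subst c.
by apply/fconP; exists k; rewrite -iterSr.
Qed.

Lemma all_reach c x : per f c -> fconnect f x c.
Proof.
move=> Hp.
apply: (@connect_ind [pred y | fconnect f y c] c x _ (Hc c x)); last exact: connect0.
move=> a b /orP [] /eqP <-; rewrite /=.
  by rewrite -fcon_f.
by rewrite (fcon_f b).

Qed.

Lemma per_reach c y : per f c -> per f y -> fconnect f c y.
Proof.
move=> Hpc /perP [m Hm].
have /fconP [k Hk] := all_reach y Hpc.
apply/fconP; exists (k * m).
rewrite -Hk -iterD.
have -> : k * m + k = k * m.+1 by rewrite mulnS addnC.
exact: iter_mul.
Qed.

Lemma per_f x : per f x -> per f (f x).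
Proof.
move=> /perP [m Hm]; apply/perP; exists m; by rewrite -iterSr iterS Hm.
Qed.

Lemma per_iter x k : per f x -> per f (iter k f x).
Proof. move=> H; elim: k => //= k IH; exact: per_f. Qed.

Lemma per_of_reach c y : per f c -> fconnect f c y -> per f y.
Proof. move=> Hp /fconP [k <-]; exact: per_iter. Qed.

Definition minper c L := [/\ 0 < L, iter L f c = c & forall k, 0 < k < L -> iter k f c != c].

Lemma minper_ex c : per f c -> exists L, minper c L.
Proof.
move=> /perP Hex.
have Hex' : exists m, iter m.+1 f c == c by case: Hex => m Hm; exists m; apply/eqP.
case: (ex_minnP Hex') => m /eqP Hm Hmin.
exists m.+1; split => // k /andP [Hk1 Hk2]; apply/negP => /eqP E.
have := Hmin k.-1; rewrite prednK // E eqxx => /(_ isT); lia.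
Qed.

Lemma iter_modL c L k : minper c L -> iter (k %% L) f c = iter k f c.
Proof.
case=> HL HLc _; rewrite {2}(divn_eq k L) addnC iterD.
by rewrite iter_mul.
Qed.

Lemma iter_injL c L a b : minper c L -> a < L -> b < L ->
  iter a f c = iter b f c -> a = b.
Proof.
move=> [HL HLc Hmin].
wlog Hab : a b / a <= b.
  move=> W Ha Hb E; case: (leqP a b) => H; first exact: W.
  symmetry; apply: W => //; exact: ltnW.
move=> Ha Hb E.
have [//|Hlt'] : a = b \/ a < b by lia.
exfalso.
have : iter (L - b + a) f c = c.
  by rewrite iterD E -iterD subnK // ltnW.
move/eqP; apply/negP; apply: Hmin; lia.
Qed.

Lemma minper_iter c L k : minper c L -> minper (iter k f c) L.
Proof.
move=> Hm; have [HL HLc Hmin] := Hm.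
rewrite -(iter_modL k Hm).
have Hk : k %% L < L by rewrite ltn_mod.
move: (k %% L) Hk => j Hj.
split => //; first by rewrite -iterD addnC iterD HLc.
move=> m /andP [Hm1 Hm2]; apply/negP => /eqP E.
have : iter m f c = c.
  have := congr1 (iter (L - j) f) E.
  rewrite -!iterD.
  have -> : L - j + j = L by rewrite subnK // ltnW.
  have -> : L - j + m + j = m + L by lia.
  by rewrite iterD HLc.
move/eqP; apply/negP; apply: Hmin; lia.
Qed.

Lemma per_minper c L : minper c L -> per f c.
Proof. case=> HL HLc _; apply/perP; exists L.-1; by rewrite prednK. Qed.

Lemma pred_ex z : per f z -> exists y, per f y /\ f y = z.
Proof.
move=> Hz; have := Hz => /perP [m Hm]; exists (iter m f z); split.
  exact: per_iter.
by rewrite -iterS.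
Qed.

Lemma pred_uniq a b : per f a -> per f b -> f a = f b -> a = b.
Proof.
move=> Ha Hb E.
have [L HL] := minper_ex Ha.
have /fconP [k Hk] := per_reach Ha Hb.
rewrite -(iter_modL k HL) in Hk.
have Hkl : k %% L < L by rewrite ltn_mod; case: HL.
move: (k %% L) Hk Hkl => j Hj Hjl.
case: j Hj Hjl => [|j] Hj Hjl; first by rewrite -Hj.
have [HL0 HLc Hmin] := HL.
have E2 : iter 1 f a = iter j.+2 f a by rewrite /= E -Hj.
case: (ltnP j.+2 L) => H.
  have := iter_injL HL _ H E2; lia.
have Ej : j.+2 = L by lia.
rewrite Ej HLc /= in E2.
by have := Hv a; rewrite E2 eqxx.
Qed.

Definition Z := [set x | per f x].

Lemma Z_f x : x \in Z -> f x \in Z.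
Proof. rewrite !inE; exact: per_f. Qed.

Lemma cverts_Z : cverts f Z = Z.
Proof.
apply/setP => v; rewrite !inE; apply/existsP/idP.
  move=> [i /andP [Hi /orP [] /eqP <-]] //; move: Hi; rewrite ?inE => Hi //.
  exact: per_f.
move=> Hv'; exists v; by rewrite ?inE Hv' eqxx.
Qed.

End Cyc.


Section Cyc2.
Variable n : nat.
Variable f : 'I_n -> 'I_n.
Hypothesis Hv : valid_profile f.
Hypothesis Hc : connectedU f.

Lemma card_eqv (C : {set 'I_n}) v : #|[set i in C | i == v]| = (v \in C).
Proof.
case Hv': (v \in C).
  have -> : [set i in C | i == v] = [set v].
    apply/setP => i; rewrite !inE; case: (eqVneq i v) => [->|]; by rewrite ?Hv' ?andbF.
  by rewrite cards1.
apply/eqP; rewrite cards_eq0; apply/eqP/setP => i; rewrite !inE.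
by case: (eqVneq i v) => [->|]; rewrite ?Hv' ?andbF.
Qed.

Lemma Z_cycle (x0 : 'I_n) : is_cycle f (Z f).
Proof.
apply/and3P; split.
- apply/set0Pn; have [k Hk] := exists_per f x0; exists (iter k f x0); by rewrite inE.
- apply/forall_inP => v; rewrite cverts_Z => Hvz.
  rewrite /cdeg card_eqv Hvz.
  have Hpv : per f v by move: Hvz; rewrite inE.
  have [y [Hy Hfy]] := pred_ex Hpv.
  have -> : [set i in Z f | f i == v] = [set y].
    apply/setP => i; rewrite !inE; apply/idP/idP.
      move=> /andP [Hi /eqP Hfi]; apply/eqP; apply: (pred_uniq Hv Hc) => //; by rewrite Hfi Hfy.
    by move=> /eqP ->; rewrite Hy Hfy eqxx.
  by rewrite cards1.
- apply/forall_inP => x; rewrite cverts_Z => Hx; apply/forall_inP => y; rewrite ?cverts_Z => Hy.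
  have Hpx : per f x by move: Hx; rewrite inE.
  have Hpy : per f y by move: Hy; rewrite inE.
  have /fconP [k <-] := per_reach Hc Hpx Hpy.
  elim: k => // k IH; apply: connect_trans IH (connect1 _).
  apply/existsP; exists (iter k f x); rewrite inE per_iter //=; by rewrite !eqxx.
Qed.

Lemma card_sum (C : {set 'I_n}) v : #|[set i in C | f i == v]| = \sum_(i in C) (f i == v : nat).
Proof.
rewrite -sum1_card [LHS]big_mkcond [RHS]big_mkcond /=; apply: eq_bigr => i _.
rewrite inE; by case: (i \in C); case: (f i == v).
Qed.

Lemma cycle_sub (C : {set 'I_n}) : is_cycle f C -> C = Z f.
Proof.
move=> /and3P [Hne /forall_inP Hdeg _].
set V := cverts f C.
have CV : C \subset V by apply/subsetP => i Hi; rewrite inE; apply/existsP; exists i; rewrite Hi eqxx.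
have fV : forall i, i \in C -> f i \in V.
  by move=> i Hi; rewrite inE; apply/existsP; exists i; rewrite Hi eqxx orbT.
have Hsum : \sum_(v in V) #|[set i in C | f i == v]| = #|C|.
  under eq_bigr => v _ do rewrite card_sum.
  rewrite exchange_big /= -sum1_card; apply: eq_bigr => i Hi.
  rewrite (bigD1 (f i)) ?fV //= eqxx big1 // => v /andP [_ Hne'].
  by rewrite eq_sym (negbTE Hne').
have Hsum2 : \sum_(v in V) (v \in C : nat) = #|C|.
  rewrite -(sum_ind C) big_mkcond /=; apply: eq_bigr => v _.
  case Hvc: (v \in C); last by case: (v \in V). by rewrite (subsetP CV _ Hvc).
have Hsum3 : \sum_(v in V) (#|[set i in C | f i == v]| + (v \in C)) = \sum_(v in V) 2.
  apply: eq_bigr => v Hv'; have := Hdeg v Hv'; rewrite /cdeg card_eqv => H; rewrite addnC; exact/eqP.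
rewrite big_split /= Hsum Hsum2 sum_nat_const in Hsum3.
have EV : V = C.
  apply/eqP; rewrite eq_sym eqEcard CV /=.
  by rewrite -(leq_pmul2r (_ : 0 < 2)) // -Hsum3 muln2 addnn.
have fC : forall i, i \in C -> f i \in C by move=> i Hi; rewrite -EV fV.
have inj : forall i j, i \in C -> j \in C -> f i = f j -> i = j.
  move=> i j Hi Hj E.
  have Hfi : f i \in V := fV _ Hi.
  have := Hdeg _ Hfi; rewrite /cdeg card_eqv -{1}EV Hfi => /eqP H1.
  have : #|[set k in C | f k == f i]| == 1 by apply/eqP; lia.
  move=> /cards1P [w Hw].
  have : i \in [set k in C | f k == f i] by rewrite inE Hi eqxx.
  have : j \in [set k in C | f k == f i] by rewrite inE Hj E eqxx.
  by rewrite Hw !inE => /eqP -> /eqP ->.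
have itC : forall i k, i \in C -> iter k f i \in C.
  by move=> i k Hi; elim: k => //= k IH; apply: fC.
have perC : forall i, i \in C -> per f i.
  move=> i Hi.
  have := looping_order f i; rewrite /looping => /trajectP [a Ha E].
  have K : forall a' b, a' <= a -> iter a' f i = iter (a' + b) f i -> i = iter b f i.
    elim => [|a' IH] b Hle; first by rewrite add0n.
    rewrite addSn !iterS => E'; apply: IH; first lia.
    apply: inj => //; apply: itC => //.
  have := K a (order f i - a) (leqnn a); rewrite (subnKC (ltnW Ha)) => /(_ (esym E)).
  move=> Ei; apply/perP; exists (order f i - a).-1; rewrite prednK; last lia.
  by rewrite -Ei.
apply/setP => z; rewrite inE; apply/idP/idP; first exact: perC.
move=> Hz; have [i Hi] := set0Pn _ Hne.
have /fconP [k <-] := per_reach Hc (perC _ Hi) Hz.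
exact: itC.
Qed.

End Cyc2.


Lemma adj_dev n (f : 'I_n -> 'I_n) i j x z : adjU f x z ->
  (f x = z -> x != i) -> (f z = x -> z != i) -> adjU (deviate f i j) x z.
Proof.
rewrite /adjU /deviate => /orP [] /eqP E H1 H2.
  by rewrite (negbTE (H1 E)) E eqxx.
by rewrite (negbTE (H2 E)) E eqxx orbT.
Qed.

Lemma adj_dev_new n (f : 'I_n -> 'I_n) i j : adjU (deviate f i j) j i.
Proof. by rewrite /adjU /deviate !eqxx orbT. Qed.

Ltac slia := repeat match goal with H : _ |- _ => clear H end; lia.

Section Depth.
Variable n : nat.
Variable f : 'I_n -> 'I_n.
Hypothesis Hv : valid_profile f.
Hypothesis Hc : connectedU f.
Hypothesis He : equilibrium_sum f.

Definition T s := [set x | fconnect f x s].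

Lemma T_self s : s \in T s. Proof. by rewrite inE connect0. Qed.

Lemma T_per s x : x \in T s -> per f x -> per f s.
Proof. rewrite inE => H1 H2; exact: per_of_reach H2 H1. Qed.

Lemma T_fs s : ~~ per f s -> f s \notin T s.
Proof. move=> Hs; by rewrite inE. Qed.

Lemma T_out s x : x \notin T s -> f x \notin T s.
Proof.
rewrite !inE; apply: contra => H; exact: connect_trans (fconnect1 f x) H.
Qed.

Lemma T_cross s x : x \in T s -> f x \notin T s -> x = s.
Proof.
rewrite !inE => /fconP [[|k] Hk] //.
by rewrite (_ : fconnect f (f x) s = true) //; apply/fconP; exists k; rewrite -iterSr.
Qed.

Lemma T_crossE s : ~~ per f s -> forall p q, adjU f p q -> p \in T s -> q \notin T s ->
  p = s /\ q = f s.
Proof.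
move=> Hs p q /orP [] /eqP E Hp Hq.
  have Ep : p = s by apply: (T_cross Hp); rewrite E.
  by split => //; rewrite -E Ep.
by have := T_out Hq; rewrite E Hp.
Qed.

Lemma T_sub v u : f v = u -> {subset T v <= T u}.
Proof.
move=> E x; rewrite !inE => H; apply: connect_trans H _; rewrite -E; exact: fconnect1.
Qed.

Notation d := (distU f).

Lemma dist_pos x y : x != y -> 0 < d x y.
Proof.
move=> Hne; rewrite lt0n; apply/eqP => E; by rewrite (dist_eq0 (Hc x y) E) eqxx in Hne.
Qed.

Lemma d_adj x y : adjU f x y -> d x y <= 1.
Proof. move=> H; have := dist_lip (Hc x x) H; by rewrite dist0. Qed.

Lemma depth1 x : ~~ per f x -> per f (f x).
Proof.
move=> Hx; apply/negPn/negP => Hfx.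
have [c0 Hc0] : exists c, per f c.
  have [k Hk] := exists_per f x; by exists (iter k f x).
have Hex : exists k, per f (iter k f x).
  have /fconP [k Hk] := all_reach Hc x Hc0; exists k; by rewrite Hk.
case: (ex_minnP Hex) => k Hk Hmin.
have Hk2 : 2 <= k.
  case: k Hk Hmin => [|[|k]] //=; [by rewrite (negbTE Hx) | by rewrite (negbTE Hfx)].
set u := iter k.-1 f x.
set v := iter k.-2 f x.
set r := iter k f x.
have Hfv : f v = u by rewrite /v /u -iterS; congr (iter _ f x); move: Hk2; slia.
have Hfu : f u = r by rewrite /u /r -iterS; congr (iter _ f x); move: Hk2; slia.
have Hu : ~~ per f u by apply/negP => H; have := Hmin k.-1 H; move: Hk2; slia.
have Hvp : ~~ per f v by apply/negP => H; have := Hmin k.-2 H; move: Hk2; slia.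
have Hr : per f r := Hk.
have [y [Hy Hfy]] := pred_ex Hr.
have Hyr : y != r by rewrite -Hfy eq_sym; exact: Hv.
have HrTu : r \notin T u by rewrite -Hfu; exact: T_fs.
have HuTv : u \notin T v by rewrite -Hfv; exact: T_fs.
have HrTv : r \notin T v by apply/negP => H; have := T_per H Hr; rewrite (negbTE Hvp).
have HyTu : y \notin T u by apply/negP => H; have := T_per H Hy; rewrite (negbTE Hu).
have HvTu : v \in T u by apply: (T_sub Hfv); exact: T_self.
have HTvu := T_sub Hfv.
have crv := T_crossE Hvp; rewrite Hfv in crv.
have cru := T_crossE Hu; rewrite Hfu in cru.
have Hdyr : 0 < d y r := dist_pos Hyr.
have Hrv : r != v by apply/eqP => E; rewrite -E in Hvp; rewrite Hr in Hvp.
have E1 := He Hrv.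
set f1 := deviate f v r in E1.
have lb1 : \sum_z (if z \in T v then d v z else (d u z).+1) <= cost_sum f v.
  apply: cost_lb => z; case: ifP => // Hz.
  have := cut_lb Hc (T_self v) HuTv crv (T_self v) (negbT Hz); rewrite dist0; slia.
have ub1 : cost_sum f1 v <= \sum_z (if z \in T v then d v z else (d r z).+1).
  rewrite /f1; apply: cost_ub => z; apply: (desc_ub (g := fun z => if z \in T v then d v z else (d r z).+1)) => a Ha.
  case Ha1: (a \in T v).
    have [b [Hab Hb]] := dist_desc (Hc v a) Ha.
    have Hb1 : b \in T v.
      apply/negPn/negP => Hb'; have [Ea _] := crv _ _ Hab Ha1 Hb'; by rewrite Ea eqxx in Ha.
    exists b; rewrite Hb1; split => //.
    apply: (adj_dev _ Hab) => [_|E]; first by [].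
    apply/eqP => Eb; rewrite Eb Hfv in E; rewrite -E in Ha1; by rewrite Ha1 in HuTv.
  case: (eqVneq a r) => [->|Har].
    exists v; rewrite T_self dist0; split => //; exact: adj_dev_new.
  have [b [Hab Hb]] := dist_desc (Hc r a) Har.
  case Hb1: (b \in T v).
    rewrite adjU_sym in Hab; have [Eb Ea] := crv _ _ Hab Hb1 (negbT Ha1).
    have := cut_lb2 Hc (T_self v) HuTv crv HrTv (T_self v); rewrite dist0 -Eb -Ea; move: Hb; slia.
  exists b; rewrite Hb1; split; last by move: Hb; slia.
  apply: (adj_dev _ Hab) => _; apply/eqP => E; [by rewrite E T_self in Ha1 | by rewrite E T_self in Hb1].
have pt1 : forall z, (if z \in T v then d v z else (d r z).+1) + (z \in ~: T u) + (if z == v then 1 else 0)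
    <= (if z \in T v then d v z else (d u z).+1) + (z \in T u).
  move=> z; rewrite in_setC.
  case: (eqVneq z v) => [->|Hzv].
    by rewrite T_self HvTu dist0.
  case Hz: (z \in T v).
    by rewrite (HTvu _ Hz) addn0 addn0 addn1 leqnSn.
  case Hzu: (z \in T u) => /=.
    have := @tri n f r u z Hc.
    have := d_adj (_ : adjU f r u); rewrite /adjU Hfu eqxx orbT => /(_ isT). slia.
  have := cut_lb Hc (T_self u) HrTu cru (T_self u) (negbT Hzu); rewrite dist0; slia.
have S1 := @leq_sum _ (index_enum _) (fun _ => true) _ _ (fun z _ => pt1 z).
rewrite !big_split /= sum_ind sum_ind sum_pt in S1.
have Huy : u != y by apply/eqP => E; rewrite E Hy in Hu.
have E2 := He Huy.
set f2 := deviate f y u in E2.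
have lb2 : \sum_z (if z \in T u then (d u z).+2 else d y z) <= cost_sum f y.
  apply: cost_lb => z; case: ifP => // Hz.
  have := cut_lb2 Hc (T_self u) HrTu cru HyTu Hz; move: Hdyr; slia.
have ub2 : cost_sum f2 y <= \sum_z (if z == y then 0 else if z \in T u then (d u z).+1 else (d y z).+1).
  rewrite /f2; apply: cost_ub => z; apply: (desc_ub (g := fun z => if z == y then 0 else if z \in T u then (d u z).+1 else (d y z).+1)) => a Ha.
  rewrite (negbTE Ha).
  case: (eqVneq a u) => [->|Hau].
    exists y; rewrite eqxx T_self; split => //; exact: adj_dev_new.
  case Ha1: (a \in T u).
    have [b [Hab Hb]] := dist_desc (Hc u a) Hau.
    have Hb1 : b \in T u.
      apply/negPn/negP => Hb'; have [Ea _] := cru _ _ Hab Ha1 Hb'; by rewrite Ea eqxx in Hau.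
    have Hby : b != y by apply/eqP => E; rewrite -E Hb1 in HyTu.
    exists b; rewrite (negbTE Hby) Hb1; split => //.
    apply: (adj_dev _ Hab) => _; apply/eqP => E; [by rewrite -E Ha1 in HyTu | by rewrite -E Hb1 in HyTu].
  case: (eqVneq a r) => [->|Har].
    exists u; rewrite (negbTE Huy) T_self dist0; split; last by move: Hdyr; slia.
    apply: (adj_dev u); first by rewrite /adjU Hfu eqxx orbT.
      by move=> E; rewrite eq_sym.
    by move=> _.
  have [b [Hab Hb]] := dist_desc (Hc y a) Ha.
  case Hb1: (b \in T u).
    rewrite adjU_sym in Hab; have [Eb Ea] := cru _ _ Hab Hb1 (negbT Ha1).
    by rewrite Ea eqxx in Har.
  exists b; split.
    apply: (adj_dev _ Hab) => E; apply/eqP => E'; first by rewrite E' eqxx in Ha.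
    by rewrite E' Hfy in E; rewrite E eqxx in Har.
  rewrite Hb1; case: ifP => _; move: Hb; slia.
have pt2 : forall z, (if z == y then 0 else if z \in T u then (d u z).+1 else (d y z).+1)
    + (z \in T u) + (if z == y then 1 else 0)
    <= (if z \in T u then (d u z).+2 else d y z) + (z \in ~: T u).
  move=> z; rewrite in_setC.
  case: (eqVneq z y) => [->|Hzy]; first by rewrite (negbTE HyTu) dist0.
  case: (z \in T u); slia.
have S2 := @leq_sum _ (index_enum _) (fun _ => true) _ _ (fun z _ => pt2 z).
rewrite !big_split /= sum_ind sum_ind sum_pt in S2.
have Hcard := cardsC (T u); rewrite card_ord in Hcard.
have X1 := leq_trans lb1 (leq_trans E1 ub1).
have X2 := leq_trans lb2 (leq_trans E2 ub2).
move: S1 S2 X1 X2 Hcard.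
set s1 := \sum_z (if z \in T v then d v z else (d r z).+1).
set s2 := \sum_z (if z \in T v then d v z else (d u z).+1).
set s3 := \sum_z (if z == y then 0 else if z \in T u then (d u z).+1 else (d y z).+1).
set s4 := \sum_z (if z \in T u then (d u z).+2 else d y z).
slia.
Qed.

End Depth.



Definition hcL L k := if k == 0 then 0 else if k == 1 then 2 else minn k.-1 (L - k).

Lemma arith_pt L k : 6 <= L -> k < L ->
  hcL L k + (k == 2) + (k == 3) <= minn k (L - k) + (k == 1).
Proof.
rewrite /hcL; case: k => [|[|[|[|k]]]] /=; try slia.
Qed.

Section Len.
Variable n : nat.
Variable f : 'I_n -> 'I_n.
Hypothesis Hv : valid_profile f.
Hypothesis Hc : connectedU f.
Hypothesis He : equilibrium_sum f.

Definition root x := if per f x then x else f x.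

Lemma root_per x : per f (root x).
Proof. rewrite /root; case: ifP => // /negbT; exact: depth1. Qed.

Definition W z := #|[set x | root x == z]|.

Lemma W_pos z : per f z -> 0 < W z.
Proof. move=> Hz; apply/card_gt0P; exists z; by rewrite inE /root Hz. Qed.

Notation d := (distU f).

Section Fixc.
Variable c : 'I_n.
Variable L : nat.
Hypothesis HL : minper f c L.
Hypothesis HL6 : 6 <= L.

Lemma Lpos : 0 < L. Proof. by case: HL. Qed.
Lemma cper : per f c. Proof. exact: per_minper HL. Qed.

Definition idx z := findex f c z %% L.

Lemma idx_lt z : idx z < L. Proof. by rewrite /idx ltn_mod Lpos. Qed.

Lemma idxE z : per f z -> iter (idx z) f c = z.
Proof.
move=> Hz; rewrite /idx (iter_modL _ HL); apply: iter_findex.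
exact (per_reach Hc cper Hz).
Qed.

Lemma idx_iter k : k < L -> idx (iter k f c) = k.
Proof.
move=> Hk; apply: (iter_injL HL) => //; first exact: idx_lt.
rewrite idxE //; apply: per_iter; exact: cper.
Qed.

Lemma idx_c : idx c = 0.
Proof. by rewrite (_ : c = iter 0 f c) // idx_iter ?Lpos. Qed.

Lemma idx_f z : per f z -> idx (f z) = if (idx z).+1 < L then (idx z).+1 else 0.
Proof.
move=> Hz; have E : f z = iter (idx z).+1 f c by rewrite iterS idxE.
case: ifP => H; first by rewrite E idx_iter.
have : (idx z).+1 = L by have := idx_lt z; move: H; slia.
move=> EL; rewrite E EL; case: HL => _ -> _; exact: idx_c.
Qed.

Definition cd k := minn k (L - k).
Definition g x := cd (idx (root x)) + (~~ per f x).
Definition h x := hcL L (idx (root x)) + (~~ per f x).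

Lemma g_step x : g x <= (g (f x)).+1 /\ g (f x) <= (g x).+1.
Proof.
rewrite /g /root.
case Hx: (per f x) => /=.
  rewrite (per_f Hx) /= idx_f //.
  have := idx_lt x; rewrite /cd.
  case: ifP; move: (idx x) => k; slia.
have Hfx := depth1 Hv Hc He (negbT Hx); rewrite Hfx /=; slia.
Qed.

Lemma g_lip a b : adjU f a b -> g b <= (g a).+1.
Proof.
move=> /orP [] /eqP <-; [exact: (g_step a).2 | exact: (g_step b).1].
Qed.

Lemma g_c : g c = 0.
Proof. by rewrite /g /root cper /= idx_c /cd addn0 min0n. Qed.

Lemma g_lb : \sum_x g x <= cost_sum f c.
Proof.
apply: cost_lb => x; have := lip_lb (g := g) g_lip (Hc c x); by rewrite g_c.
Qed.

Lemma iter2c : iter 2 f c != c.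
Proof. case: HL => _ _ H; apply: H; move: HL6; slia. Qed.

Lemma h_ub : cost_sum (deviate f c (iter 2 f c)) c <= \sum_x h x.
Proof.
apply: cost_ub => x; apply: (desc_ub (g := h)) => a Hac.
have adjf : adjU (deviate f c (iter 2 f c)) a (f a).
  by rewrite /adjU /deviate (negbTE Hac) eqxx.
case Ha: (per f a); last first.
  exists (f a); split => //.
  have Hfa := depth1 Hv Hc He (negbT Ha).
  by rewrite /h /root Ha Hfa /= addn0 addn1.
have Hra : root a = a by rewrite /root Ha.
have Eia := idxE Ha.
have Hk := idx_lt a.
rewrite /h Hra Ha /= addn0.
move: Eia Hk; case Ek: (idx a) => [|k] Eia Hk.
  by rewrite -Eia /= eqxx in Hac.
case: k Ek Eia Hk => [|k] Ek Eia Hk.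
  exists (f a); split => //.
  rewrite /root (per_f Ha) /= addn0 -Eia -iterS idx_iter; last by move: HL6; slia.
  by rewrite /hcL /=; move: HL6; slia.
case: k Ek Eia Hk => [|k] Ek Eia Hk.
  exists c; split.
    apply/orP; right; rewrite /deviate eqxx -Eia; exact: eqxx.
  by rewrite /root cper /= idx_c /hcL /=; move: HL6; slia.
case: (leqP (k.+2) (L - k.+3)) => Hle.
  set b := iter k.+2 f c.
  have Hbc : b != c by case: HL => _ _ H; apply: H; move: Hk; slia.
  have Hbp : per f b by apply: per_iter; exact: cper.
  exists b; split.
    by rewrite /adjU /deviate (negbTE Hbc) /b -iterS Eia eqxx orbT.
  rewrite /root Hbp /= idx_iter; last by move: Hk; slia.
  rewrite /hcL /=; move: Hle Hk; slia.
exists (f a); split => //.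
rewrite /root (per_f Ha) /= addn0 idx_f // Ek.
case: ifP => H; rewrite /hcL /=; move: Hle Hk; slia.
Qed.

Definition Sk k := [set x | idx (root x) == k].

Lemma Sk_W k : k < L -> #|Sk k| = W (iter k f c).
Proof.
move=> Hk; apply: eq_card => x; rewrite !inE.
apply/eqP/eqP => [<-|->]; first by rewrite idxE // root_per.
exact: idx_iter.
Qed.

Lemma len_ineq : W (iter 2 f c) + W (iter 3 f c) <= W (iter 1 f c).
Proof.
have pt : forall x, h x + (x \in Sk 2) + (x \in Sk 3) <= g x + (x \in Sk 1).
  move=> x; rewrite /h /g !inE.
  have := arith_pt HL6 (idx_lt (root x)).
  rewrite /cd; move: (idx (root x)) (~~ per f x) => k b.
  case: (k == 1); case: (k == 2); case: (k == 3); case: b; slia.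
have S := @leq_sum _ (index_enum _) (fun _ => true) _ _ (fun z _ => pt z).
have E1 : \sum_x (h x + (x \in Sk 2) + (x \in Sk 3)) = \sum_x h x + #|Sk 2| + #|Sk 3|.
  by rewrite big_split big_split !sum_ind.
have E2 : \sum_x (g x + (x \in Sk 1)) = \sum_x g x + #|Sk 1|.
  by rewrite big_split !sum_ind.
rewrite E1 E2 in S.
have E := He iter2c.
have X := leq_trans g_lb (leq_trans E h_ub).
rewrite -!Sk_W; try (move: HL6; slia).
move: S X; set s1 := \sum_i h i; set s2 := \sum_i g i; slia.
Qed.

End Fixc.

Lemma len_le5 c L : minper f c L -> L <= 5.
Proof.
move=> HL; rewrite leqNgt; apply/negP => HL6.
have HL0 : 0 < L by case: HL.
have step : forall k, W (iter k.+2 f c) < W (iter k.+1 f c).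
  move=> k; have Hm := minper_iter k HL.
  have := len_ineq Hm HL6.
  rewrite -!iterD (addnC 2) (addnC 3) (addnC 1) addn1 addn2 addn3.
  have := W_pos (per_iter (k.+3) (per_minper HL)); slia.
have K : forall m, W (iter m.+1 f c) + m <= W (iter 1 f c).
  elim => [|m IH]; first by rewrite addn0.
  have := step m; move: IH; slia.
have := K L; rewrite iterSr.
have -> : iter L f (f c) = f c.
  by rewrite -iterSr iterS; case: HL => _ -> _.
change (iter 1 f c) with (f c); move: HL0; slia.
Qed.

End Len.


Theorem mainTheorem6 (n : nat) (f : 'I_n -> 'I_n) :
  2 <= n -> valid_profile f -> equilibrium_sum f ->
  connectedU f /\
  exists C : {set 'I_n},
    [/\ is_cycle f C,
        (forall C' : {set 'I_n}, is_cycle f C' -> C' = C),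
        #|cverts f C| <= 5 &
        (forall v : 'I_n, v \in cverts f C \/
                          exists2 w, w \in cverts f C & adjU f v w)].
Proof.
move=> Hn Hv He.
have Hc : connectedU f := eq_connected Hv He.
split => //.
have x0 : 'I_n := Ordinal (leq_trans (isT : 0 < 2) Hn).
exists (Z f); split.
- exact: Z_cycle Hv Hc x0.
- move=> C' HC'; exact (cycle_sub Hc HC').
- rewrite cverts_Z.
  have [k Hk] := exists_per f x0.
  set c := iter k f x0 in Hk.
  have [L HL] := minper_ex Hk.
  have HL5 : L <= 5 := len_le5 Hv Hc He HL.
  have HL0 : 0 < L by case: HL.
  apply: leq_trans (_ : #|[set iter (nat_of_ord j) f c | j : 'I_L]| <= 5).
    apply: subset_leq_card; apply/subsetP => z; rewrite inE => Hz.
    have /fconP [m Hm] := per_reach Hc Hk Hz.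
    apply/imsetP; exists (Ordinal (ltn_pmod m HL0)) => //=.
    by rewrite (iter_modL _ HL).
  apply: leq_trans (leq_imset_card _ _) _; by rewrite card_ord.
- move=> v; rewrite cverts_Z; case Hpv: (per f v).
    by left; rewrite inE.
  right; exists (f v); last by rewrite /adjU eqxx.
  rewrite inE; exact (depth1 Hv Hc He (negbT Hpv)).
Qed.
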